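(* Let $k\ge2$, $N_2=m\ge1$, $N_1=n+1-mk\ge0$, $\eta\in\mathbb C$ with $\hbar=k\eta$, $t=e^{\eta/2}$, $q=e^{\hbar/2}$ (so $q=t^k$). Let $S_0=\bigsqcup_{\ell=1}^{N_2}S_\ell$ with $S_\ell=\{e_{N_1+k(\ell-1)+j}-e_{N_1+k(\ell-1)+j+1}: j=1,\dots,k-1\}$, so $\mathcal D_0=\{x\in V: x_j-x_{j+1}=\eta$ whenever $e_j-e_{j+1}\in S_0\}$, and use the coordinates $x_1,\dots,x_{N_1}$ and $y_\ell=\frac1k\sum_{s=0}^{k-1}x_{N_1+k\ell-s}-\frac{k-1}2\eta$ ($\ell=1,\dots,N_2$) on $\mathcal D_0$ (so $x_{N_1+k\ell-s}=y_\ell+s\eta$ there). Then the restriction of $$M=\sum_{i=1}^{n+1}\prod_{j\ne i}\frac{te^{x_j-x_i}-t^{-1}}{e^{x_j-x_i}-1}\,\mathsf T^\hbar_{x_i}$$ to $\mathcal D_0$ is well defined and equals $$\overline M=\sum_{i=1}^{N_1}\prod_{j=1,j\ne i}^{N_1}\frac{te^{x_j-x_i}-t^{-1}}{e^{x_j-x_i}-1}\prod_{\ell'=1}^{N_2}\frac{qe^{y_{\ell'}-x_i}-q^{-1}}{e^{y_{\ell'}-x_i}-1}\,\mathsf T^\hbar_{x_i}+\frac{q-q^{-1}}{t-t^{-1}}\sum_{\ell=1}^{N_2}\prod_{j=1}^{N_1}\frac{te^{x_j-y_\ell}-t^{-1}}{e^{x_j-y_\ell}-1}\prod_{\ell'\ne\ell}\frac{qe^{y_{\ell'}-y_\ell}-q^{-1}}{e^{y_{\ell'}-y_\ell}-1}\,\mathsf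 T^\eta_{y_\ell}.$$
   Context: $R=A_n=\{e_i-e_j:i\ne j\}$ realized in $V=\{x=\sum_{i=1}^{n+1}x_ie_i\in\mathbb C^{n+1}:\sum x_i=0\}$, $\{e_i\}$ orthonormal. Functions on $V$ are regarded as functions of $x_1,\dots,x_{n+1}$ invariant under simultaneous shift of all variables; $\mathsf T^a_z$ denotes the shift $z\mapsto z+a$ in the variable $z$, so $\mathsf T^\hbar_{x_i}=\tau(-\hat e_i)$ where $\hat e_i$ is the orthogonal projection of $e_i$ onto $V$ and $(\tau(\lambda)f)(x)=f(x-\hbar\lambda)$. $\hbar\in\mathbb C\setminus\pi i\mathbb Q$. For $S_0$ a set of simple roots, $\overline V=\{x\in V:(\alpha,x)=0\ \forall\alpha\in S_0\}$ and $\bar\lambda$ the orthogonal projection onto $\overline V$. The restriction of a difference operator $D=\sum_\lambda g_\lambda\tau(\lambda)$ to $\mathcal D_0$ is $\overline D=\sum_{\lambda'}\big(\sum_{\bar\lambda=\lambda'}g_\lambda\big)\big|_{\mathcal D_0}\tau(\lambda')$, provided each such restricted coefficient is a well-defined meromorphic function on $\mathcal D_0$. *)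

(* Defs.v *)
From Stdlib Require Import Reals List Arith ZArith ClassicalEpsilon.
Open Scope R_scope.

Record Cx := mkC { Cre : R ; Cim : R }.
Definition CofR (a : R) : Cx := mkC a 0.
Definition C0 : Cx := CofR 0.
Definition C1 : Cx := CofR 1.
Definition Cadd (z w : Cx) : Cx := mkC (Cre z + Cre w) (Cim z + Cim w).
Definition Copp (z : Cx) : Cx := mkC (- Cre z) (- Cim z).
Definition Csub (z w : Cx) : Cx := Cadd z (Copp w).
Definition Cmul (z w : Cx) : Cx :=
  mkC (Cre z * Cre w - Cim z * Cim w) (Cre z * Cim w + Cim z * Cre w).
Definition Cinv (z : Cx) : Cx :=
  let d := Cre z * Cre z + Cim z * Cim z in mkC (Cre z / d) (- Cim z / d).
Definition Cdiv (z w : Cx) : Cx := Cmul z (Cinv w).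
Definition Cexp (z : Cx) : Cx := mkC (exp (Cre z) * cos (Cim z)) (exp (Cre z) * sin (Cim z)).

Definition rng (lo hi : nat) : list nat := List.seq lo (S hi - lo).
Definition sumC (lo hi : nat) (f : nat -> Cx) : Cx :=
  fold_right (fun i acc => Cadd (f i) acc) C0 (rng lo hi).
Definition prodC (lo hi : nat) (f : nat -> Cx) : Cx :=
  fold_right (fun i acc => Cmul (f i) acc) C1 (rng lo hi).
Definition sumR (lo hi : nat) (f : nat -> R) : R :=
  fold_right (fun i acc => f i + acc) 0 (rng lo hi).

Definition not_in_piiQ (h : Cx) : Prop :=
  forall (p : Z) (r : positive), h <> mkC 0 (PI * IZR p / IZR (Zpos r)).

(** * The setting. Points of Cx^{n+1} and real vectors are functions of the
    coordinate index 1..n+1 (other indices are irrelevant). N2 = m blocks of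
    size k, N1 = n+1-m*k. *)
Section Setting.
Variables (n m k : nat) (eta : Cx).

Definition N1 : nat := S n - m * k.
Definition N2 : nat := m.
Definition hbar : Cx := Cmul (CofR (INR k)) eta.
Definition tt : Cx := Cexp (Cmul (CofR (/2)) eta).
Definition qq : Cx := Cexp (Cmul (CofR (/2)) hbar).

(** j is such that e_j - e_{j+1} is in S_0 *)
Definition inS0 (j : nat) : Prop :=
  exists l, (1 <= l <= N2)%nat /\
  exists j', (1 <= j' <= k - 1)%nat /\ j = (N1 + k * (l - 1) + j')%nat.

Definition vec := nat -> R.
Definition dot (v w : vec) : R := sumR 1 (S n) (fun i => v i * w i).
Definition inV (v : vec) : Prop := sumR 1 (S n) v = 0.
Definition inVbar (v : vec) : Prop := inV v /\ forall j, inS0 j -> v j = v (S j).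
Definition is_orth_proj (P : vec -> Prop) (v w : vec) : Prop :=
  P w /\ forall u, P u -> dot (fun i => v i - w i) u = 0.
Definition veq (v w : vec) : Prop := forall i, (1 <= i <= S n)%nat -> v i = w i.

(** ehat_i = orthogonal projection of e_i onto V *)
Definition ehat (i : nat) : vec :=
  fun j => (if Nat.eqb j i then 1 else 0) - / INR (S n).
(** vector of T^hbar_{x_i} : tau(- ehat_i) *)
Definition lamx (i : nat) : vec := fun j => - ehat i j.
(** vector of T^eta_{y_l} (shift by eta of all x in block l, i.e. of y_l):
    tau(lambda) with lambda = -(1/k) * projection onto V of sum_{block l} e_j *)
Definition inblock (l j : nat) : bool :=
  Nat.leb (N1 + k * (l - 1) + 1) j && Nat.leb j (N1 + k * l).
Definition lamy (l : nat) : vec :=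
  fun j => - / INR k * (if inblock l j then 1 else 0) + / INR (S n).

Definition coefT := (nat -> Cx) -> Cx.
Definition diffop := list (vec * coefT).
Definition dec (P : Prop) : bool :=
  if excluded_middle_informative P then true else false.
Definition coef (D : diffop) (lam' : vec) : coefT := fun x =>
  fold_right (fun e acc => Cadd (if dec (veq (fst e) lam') then snd e x else C0) acc)
    C0 D.
(** coefficient of tau(lam') in the restriction of D to D_0 : sum of g_lam over
    lam with bar(lam) = lam', evaluated at points x of D_0 *)
Definition rcoef (D : diffop) (lam' : vec) : coefT := fun x =>
  fold_right (fun e acc =>
      Cadd (if dec (is_orth_proj inVbar (fst e) lam') then snd e x else C0) acc)
    C0 D.

Definition inVC (x : nat -> Cx) : Prop := sumC 1 (S n) x = C0.
Definition inD0 (x : nat -> Cx) : Prop :=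
  inVC x /\ forall j, inS0 j -> Csub (x j) (x (S j)) = eta.
(** generic points: all coefficients of M have nonvanishing denominators *)
Definition generic (x : nat -> Cx) : Prop :=
  forall i j, (1 <= i <= S n)%nat -> (1 <= j <= S n)%nat -> i <> j ->
    Cexp (Csub (x j) (x i)) <> C1.

Definition ycoord (x : nat -> Cx) (l : nat) : Cx :=
  Csub (Cmul (CofR (/ INR k)) (sumC 0 (k - 1) (fun s => x (N1 + k * l - s)%nat)))
       (Cmul (CofR ((INR k - 1) / 2)) eta).

Definition fct (p a b : Cx) : Cx :=
  Cdiv (Csub (Cmul p (Cexp (Csub a b))) (Cinv p)) (Csub (Cexp (Csub a b)) C1).

Definition Mcoef (i : nat) : coefT := fun x =>
  prodC 1 (S n) (fun j => if Nat.eqb j i then C1 else fct tt (x j) (x i)).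
Definition Mop : diffop := map (fun i => (lamx i, Mcoef i)) (rng 1 (S n)).

Definition Mbx (i : nat) : coefT := fun x =>
  Cmul (prodC 1 N1 (fun j => if Nat.eqb j i then C1 else fct tt (x j) (x i)))
       (prodC 1 N2 (fun l' => fct qq (ycoord x l') (x i))).
Definition Mby (l : nat) : coefT := fun x =>
  Cmul (Cdiv (Csub qq (Cinv qq)) (Csub tt (Cinv tt)))
   (Cmul (prodC 1 N1 (fun j => fct tt (x j) (ycoord x l)))
         (prodC 1 N2 (fun l' => if Nat.eqb l' l then C1
                                else fct qq (ycoord x l') (ycoord x l)))).
Definition Mbar : diffop :=
  map (fun i => (lamx i, Mbx i)) (rng 1 N1) ++
  map (fun l => (lamy l, Mby l)) (rng 1 N2).

End Setting.

(* Main.v *)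
From Pilot Require Import Defs.
From Stdlib Require Import Reals List Arith ZArith Lia Lra Field Ring Psatz ClassicalEpsilon.
Import Pilot.Defs.
Open Scope R_scope.

Lemma Cx_ext (a b c d : R) : a = c -> b = d -> mkC a b = mkC c d.
Proof. intros; subst; reflexivity. Qed.

Lemma Cring : ring_theory C0 C1 Cadd Cmul Csub Copp (@eq Cx).
Proof.
  split; intros; repeat match goal with z : Cx |- _ => destruct z end;
  unfold Cadd, Cmul, Csub, Copp, C0, C1, CofR; simpl; try reflexivity; apply Cx_ext; ring.
Qed.

Lemma C1_neq_C0 : C1 <> C0.
Proof. unfold C1, C0, CofR; intro H; injection H; lra. Qed.

Lemma Cinv_l (z : Cx) : z <> C0 -> Cmul (Cinv z) z = C1.
Proof.
  destruct z as [a b]; intro H; unfold Cmul, Cinv, C1, CofR; simpl.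
  assert (Hd : a * a + b * b <> 0).
  { intro Hd. apply H. unfold C0, CofR.
    assert (a = 0) by nra. assert (b = 0) by nra. subst; reflexivity. }
  apply Cx_ext; field; auto.
Qed.

Lemma Cfield : field_theory C0 C1 Cadd Cmul Csub Copp Cdiv Cinv (@eq Cx).
Proof.
  split.
  - exact Cring.
  - exact C1_neq_C0.
  - reflexivity.
  - exact Cinv_l.
Qed.

Add Field Cfieldinst : Cfield.

Lemma test (a b : Cx) : b <> C0 -> Cmul (Cdiv a b) b = a.
Proof. intros; field; auto. Qed.

Lemma Cexp_add (a b : Cx) : Cexp (Cadd a b) = Cmul (Cexp a) (Cexp b).
Proof.
  destruct a as [a1 a2], b as [b1 b2]; unfold Cexp, Cadd, Cmul; simpl.
  rewrite exp_plus, cos_plus, sin_plus. apply Cx_ext; ring.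
Qed.

Lemma Cexp_C0 : Cexp C0 = C1.
Proof. unfold Cexp, C0, C1, CofR; simpl. rewrite exp_0, cos_0, sin_0. apply Cx_ext; ring. Qed.

Lemma Cexp_nz (a : Cx) : Cexp a <> C0.
Proof.
  destruct a as [a1 a2]; unfold Cexp, C0, CofR; simpl; intro H; injection H; intros H1 H2.
  pose proof (exp_pos a1). pose proof (sin2_cos2 a2). unfold Rsqr in *.
  assert (cos a2 = 0). { apply (Rmult_eq_reg_l (exp a1)); lra. }
  assert (sin a2 = 0). { apply (Rmult_eq_reg_l (exp a1)); lra. }
  nra.
Qed.

Lemma Cmul_nz (a b : Cx) : a <> C0 -> b <> C0 -> Cmul a b <> C0.
Proof.
  intros Ha Hb H. apply Hb.
  replace b with (Cmul (Cinv a) (Cmul a b)) by (field; auto).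
  rewrite H. ring.
Qed.

Fixpoint Cpow (t : Cx) (n : nat) : Cx :=
  match n with O => C1 | S p => Cmul t (Cpow t p) end.

Lemma Cpow_nz t p : t <> C0 -> Cpow t p <> C0.
Proof. intro H; induction p; simpl. exact C1_neq_C0. apply Cmul_nz; auto. Qed.

Lemma Cpow_sq t p : Cpow (Cmul t t) p = Cmul (Cpow t p) (Cpow t p).
Proof. induction p; simpl. ring. rewrite IHp; ring. Qed.

Lemma sub_nz (z : Cx) : z <> C1 -> Csub z C1 <> C0.
Proof. intros H H'. apply H. replace z with (Cadd (Csub z C1) C1) by ring. rewrite H'; ring. Qed.

Definition Fs (L : list nat) (f : nat -> Cx) : Cx := fold_right (fun i acc => Cadd (f i) acc) C0 L.
Definition Fp (L : list nat) (f : nat -> Cx) : Cx := fold_right (fun i acc => Cmul (f i) acc) C1 L.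
Definition SL (L : list nat) (f : nat -> R) : R := fold_right (fun i acc => f i + acc) 0 L.

Lemma Fs_app L1 L2 f : Fs (L1 ++ L2) f = Cadd (Fs L1 f) (Fs L2 f).
Proof. induction L1; simpl. ring. rewrite IHL1; ring. Qed.
Lemma Fp_app L1 L2 f : Fp (L1 ++ L2) f = Cmul (Fp L1 f) (Fp L2 f).
Proof. induction L1; simpl. ring. rewrite IHL1; ring. Qed.
Lemma SL_app L1 L2 f : SL (L1 ++ L2) f = SL L1 f + SL L2 f.
Proof. induction L1; simpl. ring. rewrite IHL1; ring. Qed.

Lemma Fs_ext L f g : (forall i, In i L -> f i = g i) -> Fs L f = Fs L g.
Proof. induction L; simpl; intros H; auto. rewrite H, IHL; auto. Qed.
Lemma Fp_ext L f g : (forall i, In i L -> f i = g i) -> Fp L f = Fp L g.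
Proof. induction L; simpl; intros H; auto. rewrite H, IHL; auto. Qed.
Lemma SL_ext L f g : (forall i, In i L -> f i = g i) -> SL L f = SL L g.
Proof. induction L; simpl; intros H; auto. rewrite H, IHL; auto. Qed.

Lemma Fs_zero L : Fs L (fun _ => C0) = C0.
Proof. induction L; simpl; auto. rewrite IHL; ring. Qed.
Lemma Fp_zero L f j : In j L -> f j = C0 -> Fp L f = C0.
Proof.
  induction L; simpl; intros H Hf. destruct H.
  destruct H as [<-|H]. rewrite Hf; ring. rewrite IHL; auto; ring.
Qed.

Lemma SL_add L f g : SL L (fun i => f i + g i) = SL L f + SL L g.
Proof. induction L; simpl. ring. rewrite IHL; ring. Qed.
Lemma SL_scal L c f : SL L (fun i => c * f i) = c * SL L f.
Proof. induction L; simpl. ring. rewrite IHL; ring. Qed.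
Lemma SL_const L c : SL L (fun _ => c) = INR (length L) * c.
Proof. induction L. simpl; ring. change (c + SL L (fun _ => c) = INR (S (length L)) * c). rewrite IHL, S_INR; ring. Qed.
Lemma SL_nonneg_zero L f : (forall i, In i L -> 0 <= f i) -> SL L f = 0 -> forall i, In i L -> f i = 0.
Proof.
  induction L; simpl; intros H0 H i Hi. destruct Hi.
  assert (0 <= SL L f).
  { clear IHL H Hi. induction L; simpl. lra.
    assert (0 <= f a0) by (apply H0; simpl; auto).
    assert (0 <= SL L f) by (apply IHL; intros; apply H0; simpl in *; tauto). lra. }
  assert (0 <= f a) by auto.
  destruct Hi as [<-|Hi]. lra. apply IHL; auto. lra.
Qed.

Lemma SL_delta L i f : In i L -> NoDup L ->
  SL L (fun j => (if Nat.eqb j i then 1 else 0) * f j) = f i.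
Proof.
  induction L; simpl; intros Hi Hd. destruct Hi.
  inversion Hd; subst.
  destruct (Nat.eqb_spec a i).
  - subst. rewrite (SL_ext L _ (fun _ => 0)).
    rewrite SL_const; ring.
    intros j Hj. destruct (Nat.eqb_spec j i); [subst; contradiction|ring].
  - destruct Hi as [Hi|Hi]; [contradiction|]. rewrite IHL; auto; ring.
Qed.

Lemma dec_iff (P Q : Prop) : (P <-> Q) -> dec P = dec Q.
Proof.
  intro H; unfold dec.
  destruct (excluded_middle_informative P), (excluded_middle_informative Q); tauto.
Qed.
Lemma dec_true (P : Prop) : P -> dec P = true.
Proof. intro H; unfold dec; destruct (excluded_middle_informative P); tauto. Qed.

Lemma Fs_blocks k f : forall m c d,
  Fs (seq c (m*k)) f = Fs (seq d m) (fun l => Fs (seq (c + k*(l-d)) k) f).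
Proof.
  induction m; intros c d. reflexivity.
  change (S m * k)%nat with (k + m*k)%nat. rewrite seq_app, Fs_app. simpl seq. simpl Fs.
  rewrite Nat.sub_diag, Nat.mul_0_r, Nat.add_0_r. f_equal.
  rewrite (IHm (c+k)%nat (S d)). apply Fs_ext. intros l Hl. apply in_seq in Hl.
  f_equal. f_equal. replace (l - d)%nat with (S (l - S d)) by lia. rewrite Nat.mul_succ_r. lia.
Qed.

Lemma Fp_blocks k f : forall m c d,
  Fp (seq c (m*k)) f = Fp (seq d m) (fun l => Fp (seq (c + k*(l-d)) k) f).
Proof.
  induction m; intros c d. reflexivity.
  change (S m * k)%nat with (k + m*k)%nat. rewrite seq_app, Fp_app. simpl seq. simpl Fp.
  rewrite Nat.sub_diag, Nat.mul_0_r, Nat.add_0_r. f_equal.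
  rewrite (IHm (c+k)%nat (S d)). apply Fp_ext. intros l Hl. apply in_seq in Hl.
  f_equal. f_equal. replace (l - d)%nat with (S (l - S d)) by lia. rewrite Nat.mul_succ_r. lia.
Qed.

Lemma Fp_cons i L f : Fp (i :: L) f = Cmul (f i) (Fp L f).
Proof. reflexivity. Qed.
Lemma Fs_cons i L f : Fs (i :: L) f = Cadd (f i) (Fs L f).
Proof. reflexivity. Qed.

Definition ff (t z : Cx) : Cx := Cdiv (Csub (Cmul t z) (Cinv t)) (Csub z C1).

Lemma tele t T z : Cmul t t = T -> t <> C0 -> forall p a,
  (forall j, (a <= j)%nat -> (j < a+p)%nat -> z j = Cmul T (z (S j))) ->
  (forall j, (a <= j <= a+p)%nat -> z j <> C1) ->
  Fp (seq a (S p)) (fun j => ff t (z j)) =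
  Cmul (Cinv (Cpow t (S p))) (Cdiv (Csub (Cmul T (z a)) C1) (Csub (z (a+p)%nat) C1)).
Proof.
  intros HT Ht. induction p; intros a Hz Hn.
  - simpl. rewrite Nat.add_0_r. unfold ff. subst T.
    assert (Csub (z a) C1 <> C0) by (apply sub_nz, Hn; lia).
    field; auto.
  - change (seq a (S (S p))) with (a :: seq (S a) (S p)). rewrite Fp_cons.
    rewrite IHp.
    2: { intros; apply Hz; lia. }
    2: { intros; apply Hn; lia. }
    replace (S a + p)%nat with (a + S p)%nat by lia.
    assert (Hza : z a = Cmul T (z (S a))) by (apply Hz; lia).
    assert (Csub (z a) C1 <> C0) by (apply sub_nz, Hn; lia).
    assert (Csub (z (a + S p)%nat) C1 <> C0) by (apply sub_nz, Hn; lia).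
    pose proof (Cpow_nz t p Ht).
    unfold ff. rewrite <- Hza. simpl Cpow. subst T.
    field. repeat split; auto.
Qed.

Lemma zpow T z : forall p a,
  (forall j, (a <= j)%nat -> (j < a+p)%nat -> z j = Cmul T (z (S j))) ->
  z a = Cmul (Cpow T p) (z (a+p)%nat).
Proof.
  induction p; intros a Hz. simpl. rewrite Nat.add_0_r; ring.
  rewrite (Hz a) by lia. rewrite (IHp (S a)) by (intros; apply Hz; lia).
  replace (S a + p)%nat with (a + S p)%nat by lia. simpl; ring.
Qed.

Lemma SL_sub L f g : SL L (fun i => f i - g i) = SL L f - SL L g.
Proof. induction L; simpl. ring. rewrite IHL; ring. Qed.

Lemma sumR_SL lo hi f : sumR lo hi f = SL (rng lo hi) f.
Proof. reflexivity. Qed.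

Lemma inS0_bounds n m k j : (m*k <= S n)%nat -> inS0 n m k j ->
  (1 <= j)%nat /\ (S j <= S n)%nat /\ (N1 n m k < j)%nat.
Proof.
  intros Hmk [l [[Hl1 Hl2] [j' [[Hj1 Hj2] ->]]]]. unfold N1, N2 in *.
  destruct l as [|l0]; [lia|]. replace (S l0 - 1)%nat with l0 by lia.
  assert (k * S l0 <= k * m)%nat by (apply Nat.mul_le_mono_l; lia).
  rewrite Nat.mul_succ_r in H. rewrite (Nat.mul_comm m k) in Hmk. lia.
Qed.

Lemma inblock_iff n m k l j : inblock n m k l j = true <->
  (N1 n m k + k*(l-1) + 1 <= j <= N1 n m k + k*l)%nat.
Proof. unfold inblock; rewrite Bool.andb_true_iff, !Nat.leb_le; tauto. Qed.

Lemma proj_unique n m k v w0 w : (m*k <= S n)%nat ->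
  is_orth_proj n (inVbar n m k) v w0 ->
  (is_orth_proj n (inVbar n m k) v w <-> veq n w0 w).
Proof.
  intros Hmk [[HV0 HC0] HO0]. split.
  - intros [[HV HC] HO].
    set (u := fun i => w0 i - w i).
    assert (Hu : inVbar n m k u).
    { split. unfold inV in *. rewrite sumR_SL in *. unfold u. rewrite SL_sub, HV0, HV; ring.
      intros j Hj. unfold u. rewrite HC0, HC by auto. reflexivity. }
    pose proof (HO0 u Hu) as E0. pose proof (HO u Hu) as E1.
    unfold dot in E0, E1. rewrite sumR_SL in E0, E1.
    assert (E : SL (rng 1 (S n)) (fun i => u i * u i) = 0).
    { rewrite <- (Rminus_diag_eq _ _ (eq_trans E1 (eq_sym E0))).
      rewrite <- SL_sub. apply SL_ext. intros; unfold u; ring. }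
    intros i Hi.
    assert (u i * u i = 0).
    { apply (SL_nonneg_zero _ _ (fun i _ => Rle_0_sqr (u i)) E). apply in_seq; simpl; lia. }
    unfold u in H. nra.
  - intros Hveq. split; [split|].
    + unfold inV in *. rewrite sumR_SL in *. rewrite <- HV0. apply SL_ext.
      intros i Hi. apply in_seq in Hi. simpl in Hi. symmetry; apply Hveq; lia.
    + intros j Hj. destruct (inS0_bounds n m k j Hmk Hj) as (H1 & H2 & H3).
      rewrite <- !Hveq by lia. apply HC0; auto.
    + intros u Hu. rewrite <- (HO0 u Hu). unfold dot. rewrite !sumR_SL. apply SL_ext.
      intros i Hi. apply in_seq in Hi. simpl in Hi. rewrite Hveq by lia. reflexivity.
Qed.

Lemma inblock_false n m k l j : inblock n m k l j = false ->
  ~ (N1 n m k + k*(l-1) + 1 <= j <= N1 n m k + k*l)%nat.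
Proof. intros H H'. apply inblock_iff in H'. congruence. Qed.

Lemma len_rng1 n : length (rng 1 (S n)) = S n.
Proof. unfold rng. rewrite length_seq. lia. Qed.

Lemma INR_Sn_nz n : INR (S n) <> 0.
Proof. apply not_0_INR; lia. Qed.

Lemma proj_x n m k i : (m*k <= S n)%nat -> (1 <= i <= N1 n m k)%nat ->
  is_orth_proj n (inVbar n m k) (lamx n i) (lamx n i).
Proof.
  intros Hmk Hi. split; [split|].
  - unfold inV. rewrite sumR_SL.
    rewrite (SL_ext _ _ (fun j => / INR (S n) - (if Nat.eqb j i then 1 else 0) * 1)).
    2: { intros; unfold lamx, ehat; ring. }
    rewrite SL_sub, SL_const, SL_delta, len_rng1.
    + field. apply INR_Sn_nz.
    + apply in_seq. unfold N1 in Hi. lia.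
    + apply seq_NoDup.
  - intros j Hj. destruct (inS0_bounds n m k j Hmk Hj) as (H1 & H2 & H3).
    unfold lamx, ehat. destruct (Nat.eqb_spec j i), (Nat.eqb_spec (S j) i); try lia. reflexivity.
  - intros u _. unfold dot. rewrite sumR_SL.
    rewrite (SL_ext _ _ (fun _ => 0)) by (intros; ring). rewrite SL_const; ring.
Qed.

Lemma SL_block n m k l f : (m*k <= S n)%nat -> (1 <= l <= m)%nat ->
  SL (rng 1 (S n)) (fun j => (if inblock n m k l j then 1 else 0) * f j) =
  SL (seq (S (N1 n m k + k*(l-1))) k) f.
Proof.
  intros Hmk Hl. set (b := (N1 n m k + k*(l-1))%nat).
  assert (Hkl : (k*l = k*(l-1) + k)%nat).
  { destruct l; [lia|]. rewrite Nat.mul_succ_r. f_equal. f_equal. lia. }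
  assert (k*l <= k*m)%nat by (apply Nat.mul_le_mono_l; lia).
  assert (Hb : (b + k <= S n)%nat). { unfold b, N1. rewrite (Nat.mul_comm m k) in *. lia. }
  unfold rng. replace (S (S n) - 1)%nat with (b + (k + (S n - b - k)))%nat by lia.
  rewrite !seq_app, !SL_app.
  rewrite (SL_ext (seq 1 b) _ (fun _ => 0)).
  2: { intros j Hj. apply in_seq in Hj. destruct (inblock n m k l j) eqn:E.
       apply inblock_iff in E. unfold b in *. lia. ring. }
  rewrite (SL_ext (seq (1 + b + k) _) _ (fun _ => 0)).
  2: { intros j Hj. apply in_seq in Hj. destruct (inblock n m k l j) eqn:E.
       apply inblock_iff in E. unfold b in *. lia. ring. }
  rewrite (SL_ext (seq (1 + b) k) _ f).
  2: { intros j Hj. apply in_seq in Hj. destruct (inblock n m k l j) eqn:E. ring.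
       apply inblock_false in E. unfold b in *. lia. }
  rewrite !SL_const. simpl (1 + b)%nat. ring.
Qed.

Lemma inblock_S0 n m k l j : (m*k <= S n)%nat -> (1 <= l <= m)%nat -> inS0 n m k j ->
  inblock n m k l j = inblock n m k l (S j).
Proof.
  intros Hmk Hl [l' [[Hl1 Hl2] [j' [[Hj1 Hj2] Hj]]]]. unfold N2 in *.
  destruct l as [|p]; [lia|]. destruct l' as [|p']; [lia|].
  assert (E1 : (k * S p = k*p + k)%nat) by apply Nat.mul_succ_r.
  assert (E2 : (k * S p' = k*p' + k)%nat) by apply Nat.mul_succ_r.
  replace (S p' - 1)%nat with p' in Hj by lia.
  assert (Hc : ((p' < p /\ k * S p' <= k * p) \/ p' = p \/ (p < p' /\ k * S p <= k * p'))%nat).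
  { destruct (Nat.lt_total p' p) as [H|[H|H]].
    - left; split; auto; apply Nat.mul_le_mono_l; lia.
    - auto.
    - right; right; split; auto; apply Nat.mul_le_mono_l; lia. }
  destruct (inblock n m k (S p) j) eqn:Ea, (inblock n m k (S p) (S j)) eqn:Eb; try reflexivity.
  - apply inblock_iff in Ea. apply inblock_false in Eb. exfalso. apply Eb.
    replace (S p - 1)%nat with p in * by lia.
    destruct Hc as [[? ?]|[->|[? ?]]]; lia.
  - apply inblock_false in Ea. apply inblock_iff in Eb. exfalso. apply Ea.
    replace (S p - 1)%nat with p in * by lia.
    destruct Hc as [[? ?]|[->|[? ?]]]; lia.
Qed.

Lemma block_const n m k l (u : vec) : (1 <= l <= m)%nat ->
  (forall j, inS0 n m k j -> u j = u (S j)) ->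
  forall r, (r < k)%nat -> u (S (N1 n m k + k*(l-1)) + r)%nat = u (S (N1 n m k + k*(l-1))).
Proof.
  intros Hl Hu. induction r; intros Hr. rewrite Nat.add_0_r; reflexivity.
  rewrite <- IHr by lia. symmetry. replace (S (N1 n m k + k * (l - 1)) + S r)%nat
    with (S (S (N1 n m k + k * (l - 1)) + r)) by lia.
  apply Hu. exists l. split. unfold N2; lia. exists (S r). split. lia. lia.
Qed.

Lemma proj_y n m k l r : (m*k <= S n)%nat -> (1 <= k)%nat -> (1 <= l <= m)%nat -> (r < k)%nat ->
  is_orth_proj n (inVbar n m k) (lamx n (S (N1 n m k + k*(l-1)) + r)) (lamy n m k l).
Proof.
  intros Hmk Hk Hl Hr. assert (Hk0 : INR k <> 0) by (apply not_0_INR; lia).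
  split; [split|].
  - unfold inV. rewrite sumR_SL.
    rewrite (SL_ext _ _ (fun j => (- / INR k) * ((if inblock n m k l j then 1 else 0) * 1) + / INR (S n))).
    2: { intros; unfold lamy; ring. }
    rewrite SL_add, SL_scal, SL_block, !SL_const, len_rng1, length_seq by auto.
    field. split; auto. apply INR_Sn_nz.
  - intros j Hj. unfold lamy. rewrite (inblock_S0 n m k l j) by auto. reflexivity.
  - intros u [_ Hu]. unfold dot. rewrite sumR_SL.
    set (i := (S (N1 n m k + k * (l - 1)) + r)%nat).
    rewrite (SL_ext _ _ (fun j => (/ INR k) * ((if inblock n m k l j then 1 else 0) * u j)
                                  - (if Nat.eqb j i then 1 else 0) * u j)).
    2: { intros; unfold lamy, lamx, ehat; ring. }
    assert (Hin : In i (rng 1 (S n))).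
    { apply in_seq. unfold i.
         assert (k*l <= k*m)%nat by (apply Nat.mul_le_mono_l; lia).
         assert (Hkl : (k*l = k*(l-1) + k)%nat).
         { destruct l; [lia|]. rewrite Nat.mul_succ_r. f_equal. f_equal. lia. }
         unfold N1. rewrite (Nat.mul_comm m k) in *. generalize dependent (k*(l-1))%nat; generalize dependent (k*l)%nat; generalize dependent (k*m)%nat; intros; lia. }
    rewrite SL_sub, SL_scal, (SL_block n m k l u Hmk Hl), (SL_delta _ i u Hin (seq_NoDup _ _)).
    rewrite (SL_ext _ _ (fun _ => u i)).
    2: { intros j Hj. apply in_seq in Hj. unfold i.
         replace j with (S (N1 n m k + k * (l - 1)) + (j - S (N1 n m k + k * (l - 1))))%nat by lia.
         rewrite !(block_const n m k l u Hl Hu) by lia. reflexivity. }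
    rewrite SL_const, length_seq. field. auto.
Qed.

Ltac glia := repeat match goal with
  | H : context [(?a * ?b)%nat] |- _ => generalize dependent (a*b)%nat
  | |- context [(?a * ?b)%nat] => generalize dependent (a*b)%nat end; intros; lia.

Lemma tt_sq eta : Cmul (tt eta) (tt eta) = Cexp eta.
Proof.
  unfold tt. rewrite <- Cexp_add. f_equal. destruct eta as [a b].
  unfold Cadd, Cmul, CofR; simpl. apply Cx_ext; field.
Qed.

Lemma tt_nz eta : tt eta <> C0.
Proof. apply Cexp_nz. Qed.

Lemma qq_pow k eta : qq k eta = Cpow (tt eta) k.
Proof.
  unfold qq, hbar, tt. induction k.
  - simpl. replace (Cmul (CofR (/ 2)) (Cmul (CofR 0) eta)) with C0.
    apply Cexp_C0. destruct eta; unfold Cmul, CofR, C0; simpl; apply Cx_ext; ring.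
  - simpl Cpow. rewrite <- IHk, <- Cexp_add. f_equal. destruct eta as [a b].
    rewrite S_INR. unfold Cadd, Cmul, CofR; simpl. apply Cx_ext; ring.
Qed.

Lemma block_bound n m k l : (m*k <= S n)%nat -> (1 <= l <= m)%nat ->
  (N1 n m k + k*l <= S n)%nat /\ (k*l = k*(l-1) + k)%nat.
Proof.
  intros Hmk Hl.
  assert (Hkl : (k*l = k*(l-1) + k)%nat).
  { destruct l; [lia|]. rewrite Nat.mul_succ_r. f_equal. f_equal. lia. }
  assert (k*l <= k*m)%nat by (apply Nat.mul_le_mono_l; lia).
  split; auto. unfold N1. rewrite (Nat.mul_comm m k) in *.
  generalize dependent (k*(l-1))%nat; generalize dependent (k*l)%nat;
  generalize dependent (k*m)%nat; intros; lia.
Qed.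

Lemma block_disj n m k l l' j : (1 <= k)%nat -> (1 <= l)%nat -> (1 <= l')%nat -> l <> l' ->
  (S (N1 n m k + k*(l'-1)) <= j < S (N1 n m k + k*(l'-1)) + k)%nat ->
  j <> (N1 n m k + k*l)%nat.
Proof.
  intros Hk Hl Hl' Hne Hj.
  destruct l as [|p]; [lia|]. destruct l' as [|p']; [lia|].
  replace (S p' - 1)%nat with p' in Hj by lia.
  rewrite Nat.mul_succ_r.
  destruct (Nat.lt_total p' p) as [H|[H|H]]; [|lia|].
  - assert (k * S p' <= k*p)%nat by (apply Nat.mul_le_mono_l; lia).
    rewrite Nat.mul_succ_r in H0.
    generalize dependent (k*p)%nat; generalize dependent (k*p')%nat; intros; lia.
  - assert (k * S p <= k*p')%nat by (apply Nat.mul_le_mono_l; lia).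
    rewrite Nat.mul_succ_r in H0.
    generalize dependent (k*p)%nat; generalize dependent (k*p')%nat; intros; lia.
Qed.

Lemma CofR_S s : CofR (INR (S s)) = Cadd (CofR (INR s)) C1.
Proof. rewrite S_INR. unfold CofR, Cadd, C1; simpl. apply Cx_ext; ring. Qed.

Lemma Fs_lin X e k : Fs (seq 0 k) (fun s => Cadd X (Cmul (CofR (INR s)) e)) =
  Cadd (Cmul (CofR (INR k)) X) (Cmul (CofR (INR k * (INR k - 1) / 2)) e).
Proof.
  induction k.
  - simpl. destruct X, e; unfold Cadd, Cmul, CofR, C0; simpl; apply Cx_ext; field.
  - rewrite seq_S, Fs_app, IHk. simpl Fs. rewrite S_INR.
    destruct X, e; unfold Cadd, Cmul, CofR, C0; simpl; apply Cx_ext; field.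
Qed.

Lemma S0_step n m k eta x j : inD0 n m k eta x -> inS0 n m k j -> x j = Cadd (x (S j)) eta.
Proof.
  intros [_ HD] Hj. specialize (HD j Hj). rewrite <- HD. ring.
Qed.

Lemma ycoord_last n m k eta x l : (m*k <= S n)%nat -> (2 <= k)%nat -> (1 <= l <= m)%nat ->
  inD0 n m k eta x -> ycoord n m k eta x l = x (N1 n m k + k*l)%nat.
Proof.
  intros Hmk Hk Hl HD. destruct (block_bound n m k l Hmk Hl) as [Hb Hkl].
  set (X := x (N1 n m k + k*l)%nat).
  assert (Hs : forall s, (s < k)%nat -> x (N1 n m k + k*l - s)%nat = Cadd X (Cmul (CofR (INR s)) eta)).
  { induction s; intros Hs.
    - rewrite Nat.sub_0_r. unfold X. simpl. destruct eta; unfold Cadd, Cmul, CofR; simpl.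
      destruct (x (N1 n m k + k*l)%nat); simpl; apply Cx_ext; ring.
    - rewrite (S0_step n m k eta x _ HD).
      + replace (S (N1 n m k + k * l - S s)) with (N1 n m k + k * l - s)%nat by lia.
        rewrite IHs by lia. rewrite CofR_S. ring.
      + exists l. split. unfold N2; lia. exists (k - S s)%nat. split. lia. clear -Hkl Hb Hs Hk. glia. }
  unfold ycoord, sumC. unfold rng. replace (S (k - 1) - 0)%nat with k by lia.
  change (fold_right (fun i acc => Cadd (x (N1 n m k + k * l - i)%nat) acc) C0 (seq 0 k))
    with (Fs (seq 0 k) (fun s => x (N1 n m k + k * l - s)%nat)).
  rewrite (Fs_ext _ _ (fun s => Cadd X (Cmul (CofR (INR s)) eta))).
  2: { intros s Hs'. apply in_seq in Hs'. apply Hs. lia. }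
  rewrite Fs_lin. assert (INR k <> 0) by (apply not_0_INR; lia).
  destruct X, eta; unfold Csub, Cadd, Copp, Cmul, CofR; simpl; apply Cx_ext; field; auto.
Qed.

Lemma inS0_block n m k l j : (1 <= l <= m)%nat ->
  (S (N1 n m k + k*(l-1)) <= j < N1 n m k + k*(l-1) + k)%nat -> inS0 n m k j.
Proof.
  intros Hl Hj. exists l. split. unfold N2; lia.
  exists (j - (N1 n m k + k*(l-1)))%nat. split; lia.
Qed.

Lemma zstep n m k eta x l c j : inD0 n m k eta x -> (1 <= l <= m)%nat ->
  (S (N1 n m k + k*(l-1)) <= j < N1 n m k + k*(l-1) + k)%nat ->
  Cexp (Csub (x j) c) = Cmul (Cexp eta) (Cexp (Csub (x (S j)) c)).
Proof.
  intros HD Hl Hj. rewrite (S0_step n m k eta x j HD (inS0_block n m k l j Hl Hj)).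
  rewrite <- Cexp_add. f_equal. ring.
Qed.

Lemma BP n m k eta x l c : (m*k <= S n)%nat -> (2 <= k)%nat -> (1 <= l <= m)%nat ->
  inD0 n m k eta x ->
  (forall j, (S (N1 n m k + k*(l-1)) <= j < S (N1 n m k + k*(l-1)) + k)%nat -> Cexp (Csub (x j) c) <> C1) ->
  Fp (seq (S (N1 n m k + k*(l-1))) k) (fun j => fct (tt eta) (x j) c) =
  fct (qq k eta) (x (N1 n m k + k*l)%nat) c.
Proof.
  intros Hmk Hk Hl HD HG. destruct (block_bound n m k l Hmk Hl) as [Hb Hkl].
  set (a := S (N1 n m k + k*(l-1))).
  destruct k as [|p]; [lia|].
  set (z := fun j => Cexp (Csub (x j) c)).
  assert (Hz : forall j, (a <= j)%nat -> (j < a + p)%nat -> z j = Cmul (Cexp eta) (z (S j))).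
  { intros j H1 H2. unfold z. apply (zstep n m (S p) eta x l c j HD Hl). unfold a in *; lia. }
  change (fun j => fct (tt eta) (x j) c) with (fun j => ff (tt eta) (z j)).
  rewrite (tele (tt eta) (Cexp eta) z (tt_sq eta) (tt_nz eta) p a Hz).
  2: { intros j Hj. apply HG. unfold a in *; lia. }
  rewrite (zpow _ z p a Hz).
  replace (a + p)%nat with (N1 n m (S p) + S p * l)%nat by (unfold a; lia).
  rewrite qq_pow. unfold fct. fold (z (N1 n m (S p) + S p * l)%nat).
  assert (HZ : Csub (z (N1 n m (S p) + S p * l)%nat) C1 <> C0).
  { apply sub_nz, HG. unfold a in *; lia. }
  rewrite <- tt_sq, Cpow_sq. simpl Cpow.
  pose proof (tt_nz eta). pose proof (Cpow_nz (tt eta) p H).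
  field. repeat split; auto.
Qed.

Lemma OB n m k eta x l : (m*k <= S n)%nat -> (2 <= k)%nat -> (1 <= l <= m)%nat ->
  inD0 n m k eta x ->
  (forall j, (S (N1 n m k + k*(l-1)) <= j < N1 n m k + k*l)%nat ->
     Cexp (Csub (x j) (x (N1 n m k + k*l)%nat)) <> C1) ->
  Fp (seq (S (N1 n m k + k*(l-1))) k)
     (fun j => if Nat.eqb j (N1 n m k + k*l) then C1 else fct (tt eta) (x j) (x (N1 n m k + k*l)%nat)) =
  Cdiv (Csub (qq k eta) (Cinv (qq k eta))) (Csub (tt eta) (Cinv (tt eta))).
Proof.
  intros Hmk Hk Hl HD HG. destruct (block_bound n m k l Hmk Hl) as [Hb Hkl].
  set (a := S (N1 n m k + k*(l-1))).
  set (L := (N1 n m k + k*l)%nat).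
  destruct k as [|p]; [lia|]. destruct p as [|p']; [lia|].
  set (z := fun j => Cexp (Csub (x j) (x L))).
  rewrite seq_S, Fp_app.
  replace (a + S p')%nat with L by (unfold a, L; lia).
  simpl Fp at 2. rewrite Nat.eqb_refl.
  rewrite (Fp_ext _ _ (fun j => ff (tt eta) (z j))).
  2: { intros j Hj. apply in_seq in Hj. destruct (Nat.eqb_spec j L). unfold a, L in *; lia. reflexivity. }
  assert (Hz : forall j, (a <= j)%nat -> (j < a + S p')%nat -> z j = Cmul (Cexp eta) (z (S j))).
  { intros j H1 H2. unfold z. apply (zstep n m (S (S p')) eta x l (x L) j HD Hl). unfold a, L in *; lia. }
  rewrite (tele (tt eta) (Cexp eta) z (tt_sq eta) (tt_nz eta) p' a).
  2: { intros; apply Hz; lia. }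
  2: { intros j Hj. apply HG. unfold a, L in *; lia. }
  assert (HzL : z (a + p')%nat = Cexp eta).
  { rewrite Hz by lia. replace (S (a + p')) with L by (unfold a, L in *; lia).
    unfold z. replace (Csub (x L) (x L)) with C0 by ring. rewrite Cexp_C0. ring. }
  assert (HT1 : Csub (Cexp eta) C1 <> C0).
  { rewrite <- HzL. apply sub_nz, HG. unfold a, L in *; lia. }
  rewrite (zpow _ z p' a) by (intros; apply Hz; lia).
  rewrite HzL. rewrite qq_pow.
  rewrite <- tt_sq in *. rewrite Cpow_sq. simpl Cpow.
  pose proof (tt_nz eta) as Ht. pose proof (Cpow_nz (tt eta) p' Ht).
  assert (Csub (tt eta) (Cinv (tt eta)) <> C0).
  { intro E. apply HT1. replace (Csub (Cmul (tt eta) (tt eta)) C1)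
      with (Cmul (tt eta) (Csub (tt eta) (Cinv (tt eta)))) by (field; auto).
    rewrite E; ring. }
  field. repeat split; auto.
Qed.

Lemma Fp_pull L l c h : In l L -> NoDup L ->
  Fp L (fun j => if Nat.eqb j l then c else h j) =
  Cmul c (Fp L (fun j => if Nat.eqb j l then C1 else h j)).
Proof.
  induction L; simpl; intros Hi Hd. destruct Hi. inversion Hd; subst.
  destruct (Nat.eqb_spec a l).
  - subst. rewrite (Fp_ext L _ h), (Fp_ext L (fun j => if Nat.eqb j l then C1 else h j) h). ring.
    all: intros j Hj; destruct (Nat.eqb_spec j l); [subst; contradiction|reflexivity].
  - destruct Hi as [Hi|Hi]; [contradiction|]. rewrite IHL; auto; ring.
Qed.

Lemma Mcoef_dec n m k eta i x : (m*k <= S n)%nat ->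
  Mcoef n eta i x =
  Cmul (Fp (seq 1 (N1 n m k)) (fun j => if Nat.eqb j i then C1 else fct (tt eta) (x j) (x i)))
       (Fp (seq 1 m) (fun l => Fp (seq (S (N1 n m k + k*(l-1))) k)
                          (fun j => if Nat.eqb j i then C1 else fct (tt eta) (x j) (x i)))).
Proof.
  intros Hmk. unfold Mcoef, prodC, rng.
  change (fold_right ?F C1 ?L) with (Fp L (fun j => if Nat.eqb j i then C1 else fct (tt eta) (x j) (x i))).
  replace (S (S n) - 1)%nat with (N1 n m k + m*k)%nat by (unfold N1; lia).
  rewrite seq_app, Fp_app, (Fp_blocks k _ m (1 + N1 n m k) 1). reflexivity.
Qed.

Lemma prodC_N1 n m k f : prodC 1 (N1 n m k) f = Fp (seq 1 (N1 n m k)) f.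
Proof. unfold prodC, rng. replace (S (N1 n m k) - 1)%nat with (N1 n m k) by lia. reflexivity. Qed.
Lemma prodC_N2 m f : prodC 1 (N2 m) f = Fp (seq 1 m) f.
Proof. unfold prodC, rng, N2. replace (S m - 1)%nat with m by lia. reflexivity. Qed.

Lemma gen_blk n m k (x : nat -> Cx) l c : (m*k <= S n)%nat -> (1 <= l <= m)%nat -> generic n x ->
  (1 <= c <= S n)%nat ->
  forall j, (S (N1 n m k + k*(l-1)) <= j < S (N1 n m k + k*(l-1)) + k)%nat -> j <> c ->
  Cexp (Csub (x j) (x c)) <> C1.
Proof.
  intros Hmk Hl HG Hc j Hj Hjc. destruct (block_bound n m k l Hmk Hl) as [Hb Hkl].
  apply HG; auto; lia.
Qed.

Lemma Mcoef_x n m k eta x i : (m*k <= S n)%nat -> (2 <= k)%nat ->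
  inD0 n m k eta x -> generic n x -> (1 <= i <= N1 n m k)%nat ->
  Mcoef n eta i x = Mbx n m k eta i x.
Proof.
  intros Hmk Hk HD HG Hi. rewrite (Mcoef_dec n m k). unfold Mbx. rewrite prodC_N1, prodC_N2.
  f_equal. apply Fp_ext. intros l Hl. apply in_seq in Hl.
  assert (Hl' : (1 <= l <= m)%nat) by lia.
  rewrite (ycoord_last n m k eta x l Hmk Hk Hl' HD).
  rewrite (Fp_ext _ _ (fun j => fct (tt eta) (x j) (x i))).
  2: { intros j Hj. apply in_seq in Hj. destruct (Nat.eqb_spec j i); [glia|reflexivity]. }
  apply BP; auto.
  intros j Hj. apply (gen_blk n m k x l i Hmk Hl' HG); try lia.
  - unfold N1 in *; lia.
  - clear -Hi Hj. generalize dependent (k*(l-1))%nat. intros; lia.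
  - auto.
Qed.

Lemma fct_zero eta a b : b = Cadd a eta -> fct (tt eta) a b = C0.
Proof.
  intros Hb. unfold fct. set (E := Cexp (Csub a b)).
  assert (HE : Cmul E (Cexp eta) = C1).
  { unfold E. rewrite <- Cexp_add. replace (Cadd (Csub a b) eta) with C0 by (rewrite Hb; ring).
    apply Cexp_C0. }
  pose proof (tt_nz eta) as Ht.
  replace (Cmul (tt eta) E) with (Cmul (Cinv (tt eta)) (Cmul E (Cexp eta))).
  rewrite HE. unfold Cdiv. ring.
  rewrite <- tt_sq. field. auto.
Qed.

Lemma Mcoef_zero n m k eta x l i : (m*k <= S n)%nat -> (1 <= l <= m)%nat ->
  inD0 n m k eta x ->
  (S (N1 n m k + k*(l-1)) <= i < N1 n m k + k*l)%nat ->
  Mcoef n eta i x = C0.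
Proof.
  intros Hmk Hl HD Hi. destruct (block_bound n m k l Hmk Hl) as [Hb Hkl].
  unfold Mcoef, prodC.
  change (fold_right ?F C1 ?L) with (Fp L (fun j => if Nat.eqb j i then C1 else fct (tt eta) (x j) (x i))).
  apply (Fp_zero _ _ (S i)).
  - apply in_seq. lia.
  - destruct (Nat.eqb_spec (S i) i); [lia|].
    apply fct_zero. apply (S0_step n m k eta x i HD). apply (inS0_block n m k l i Hl). lia.
Qed.

Lemma Mcoef_last n m k eta x l : (m*k <= S n)%nat -> (2 <= k)%nat -> (1 <= l <= m)%nat ->
  inD0 n m k eta x -> generic n x ->
  Mcoef n eta (N1 n m k + k*l)%nat x = Mby n m k eta l x.
Proof.
  intros Hmk Hk Hl HD HG. destruct (block_bound n m k l Hmk Hl) as [Hb Hkl].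
  set (L := (N1 n m k + k*l)%nat).
  rewrite (Mcoef_dec n m k). unfold Mby. rewrite prodC_N1, prodC_N2.
  rewrite (ycoord_last n m k eta x l Hmk Hk Hl HD). fold L.
  rewrite (Fp_ext (seq 1 (N1 n m k)) (fun j => if Nat.eqb j L then C1 else _)
             (fun j => fct (tt eta) (x j) (x L))).
  2: { intros j Hj. apply in_seq in Hj. destruct (Nat.eqb_spec j L); [unfold L in *; lia|reflexivity]. }
  rewrite (Fp_ext (seq 1 m) _ (fun l' => if Nat.eqb l' l then
              Cdiv (Csub (qq k eta) (Cinv (qq k eta))) (Csub (tt eta) (Cinv (tt eta)))
            else fct (qq k eta) (ycoord n m k eta x l') (x L))).
  - rewrite Fp_pull. ring. apply in_seq; lia. apply seq_NoDup.
  - intros l' Hl'. apply in_seq in Hl'. assert (Hl'' : (1 <= l' <= m)%nat) by lia.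
    destruct (Nat.eqb_spec l' l).
    + subst l'. apply OB; auto. intros j Hj.
      apply (gen_blk n m k x l L Hmk Hl HG); unfold L in *; lia.
    + rewrite (ycoord_last n m k eta x l' Hmk Hk Hl'' HD).
      rewrite (Fp_ext _ _ (fun j => fct (tt eta) (x j) (x L))).
      2: { intros j Hj. apply in_seq in Hj. destruct (Nat.eqb_spec j L); [|reflexivity].
           exfalso. apply (block_disj n m k l l' j); try lia. }
      apply BP; auto. intros j Hj.
      apply (gen_blk n m k x l' L Hmk Hl'' HG); try (unfold L in *; lia).
      apply (block_disj n m k l l' j); lia.
  - exact Hmk.
Qed.

Lemma rcoef_map n m k (lv : nat -> vec) (cf : nat -> coefT) L lam' x :
  rcoef n m k (map (fun i => (lv i, cf i)) L) lam' x =
  Fs L (fun i => if dec (is_orth_proj n (inVbar n m k) (lv i) lam') then cf i x else C0).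
Proof. induction L; simpl; auto. unfold rcoef in *; simpl. rewrite IHL. reflexivity. Qed.

Lemma coef_map n (lv : nat -> vec) (cf : nat -> coefT) L lam' x :
  coef n (map (fun i => (lv i, cf i)) L) lam' x =
  Fs L (fun i => if dec (veq n (lv i) lam') then cf i x else C0).
Proof. induction L; simpl; auto. unfold coef in *; simpl. rewrite IHL. reflexivity. Qed.

Lemma coef_app n D1 D2 lam' x : coef n (D1 ++ D2) lam' x = Cadd (coef n D1 lam' x) (coef n D2 lam' x).
Proof. induction D1; simpl. unfold coef; simpl; ring. unfold coef in *; simpl. rewrite IHD1. ring. Qed.

Theorem mainTheorem14 (n m k : nat) (eta : Cx) :
  (2 <= k)%nat -> (1 <= m)%nat -> (m * k <= S n)%nat ->
  not_in_piiQ (hbar k eta) ->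
  forall (lam' : vec) (x : nat -> Cx),
    inD0 n m k eta x -> generic n x ->
    rcoef n m k (Mop n eta) lam' x = coef n (Mbar n m k eta) lam' x.
Proof.
  intros Hk Hm Hmk _ lam' x HD HG.
  unfold Mop, Mbar. rewrite rcoef_map, coef_app, !coef_map.
  unfold rng. replace (S (S n) - 1)%nat with (N1 n m k + m*k)%nat by (unfold N1; lia).
  replace (S (N1 n m k) - 1)%nat with (N1 n m k) by lia.
  replace (S (N2 m) - 1)%nat with m by (unfold N2; lia).
  rewrite seq_app, Fs_app, (Fs_blocks k _ m (1 + N1 n m k) 1). f_equal.
  - apply Fs_ext. intros i Hi. apply in_seq in Hi.
    assert (Hi' : (1 <= i <= N1 n m k)%nat) by lia.
    rewrite (dec_iff _ (veq n (lamx n i) lam')).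
    2: { apply proj_unique; auto. apply proj_x; auto. }
    rewrite (Mcoef_x n m k eta x i); auto.
  - apply Fs_ext. intros l Hl. apply in_seq in Hl. assert (Hl' : (1 <= l <= m)%nat) by lia.
    destruct (block_bound n m k l Hmk Hl') as [Hb Hkl].
    replace (1 + N1 n m k + k * (l - 1))%nat with (S (N1 n m k + k * (l - 1))) by lia.
    rewrite (Fs_ext _ _ (fun i => if dec (veq n (lamy n m k l) lam') then Mcoef n eta i x else C0)).
    2: { intros i Hi. apply in_seq in Hi. rewrite (dec_iff _ (veq n (lamy n m k l) lam')); [reflexivity|]. apply proj_unique; auto.
         replace i with (S (N1 n m k + k * (l - 1)) + (i - S (N1 n m k + k * (l - 1))))%nat by lia.
         apply proj_y; auto; lia. }
    destruct (dec (veq n (lamy n m k l) lam')).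
    + destruct k as [|p]; [lia|]. rewrite seq_S, Fs_app.
      rewrite (Fs_ext _ _ (fun _ => C0)).
      2: { intros i Hi. apply in_seq in Hi. apply (Mcoef_zero n m (S p) eta x l i Hmk Hl' HD). lia. }
      rewrite Fs_zero. cbn [Fs fold_right].
      replace (S (N1 n m (S p) + S p * (l - 1)) + p)%nat with (N1 n m (S p) + S p * l)%nat by lia.
      rewrite (Mcoef_last n m (S p) eta x l); auto. ring.
    + apply Fs_zero.
Qed.
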